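(* Let $G$ be a finite abelian group, $n$ a positive integer, and $\mathcal M=(I_n(\hat G),\le)$. Then $\mathrm{Rep}(\mathcal M,\hat G)$ is the full subcategory of $\mathrm{Rep}(I_n(\hat G),\hat G)$ whose objects are direct sums of the simple object $\hat G^{\oplus n}$.
   Context: $\hat G=G\sqcup\{0\}$ with $0$ absorbing. $\mathrm{Vect}_{\hat G}$: objects are finite pointed sets with an action of $\hat G$ ($0v=0$, $g0=0$) such that $G$ acts freely on nonzero elements; morphisms $f$ satisfy $f(0)=0$, $f(gv)=gf(v)$, $f(v_1)=f(v_2)\neq0\Rightarrow Gv_1=Gv_2$; $\oplus$ is disjoint union with zeros identified. $I_n(\hat G)$ is the monoid of $n\times n$ matrices over $\hat G$ with at most one nonzero entry in each row and column, under matrix multiplication, with $G$ as scalar matrices. $\hat G^{\oplus n}=\{0\}\cup\{g\mathbf e_i: g\in G, 1\le i\le n\}$ with $I_n(\hat G)$ acting by matrix multiplication. $\mathrm{Rep}(I_n(\hat G),\hat G)$: objects $V$ of $\mathrm{Vect}_{\hat G}$ with an action $a\mapsto V(a)$ of $I_n(\hat G)$ by morphisms of $\mathrm{Vect}_{\hat G}$, zero matrix acting as zero and $g\in G$ as the scalar $g$; morphisms are equivariant morphisms. On $I_n(\hat G)$, and more generally on $\mathrm{End}_{\hat G}(V)$, the partial order is $A\le B$ iff for all $x$, $Ax\neq0$ implies $Bx=Ax$. $\mathrm{Rep}(\mathcal M,\hat G)$ is the full subcategory of $\mathrm{Rep}(I_n(\hat G),\hat G)$ of those $V$ such that whenever $\bigvee_{a\in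 I}a$ exists in $I_n(\hat G)$ for a subset $I$, the join $\bigvee_{a\in I}V(a)$ exists in $\mathrm{End}_{\hat G}(V)$ and equals $V(\bigvee_{a\in I}a)$. *)

(* Defs.v *)
From HB Require Import structures.
From mathcomp Require Import all_boot all_order all_algebra all_fingroup.
Unset Printing Implicit Defensive.

Local Open Scope ring_scope.
Local Open Scope group_scope.

Section Defs.
Variables (gT : finGroupType) (n : nat).

(* \hat G = G ⊔ {0} is modelled as option gT, None = 0. *)
Definition ghat := option gT.

Definition gmul (a b : ghat) : ghat :=
  match a, b with Some x, Some y => Some (x * y) | _, _ => None end.

Definition gmx := 'M[ghat]_n.

Definition pmono (A : gmx) : bool :=
  [forall i, #|[set j | A i j != None]| <= 1]%N &&
  [forall j, #|[set i | A i j != None]| <= 1]%N.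

(* matrix multiplication over \hat G (the sum (AB)_ij = sum_k A_ik B_kj has at most
   one nonzero term when A is in I_n(\hat G)) *)
Definition pmmul (A B : gmx) : gmx :=
  \matrix_(i, j) match [pick k | (A i k != None) && (B k j != None)] with
                 | Some k => gmul (A i k) (B k j)
                 | None => None
                 end.

Definition zero_gmx : gmx := \matrix_(i, j) None.
Definition scal_gmx (g : gT) : gmx := \matrix_(i, j) if i == j then Some g else None.

(* A representation-candidate: a finite pointed set with a \hat G action
   (0 acting as the constant zero) and an action of matrices *)
Record rep := Rep {
  carrier :> finType;
  zero : carrier;
  gact : gT -> carrier -> carrier;
  mact : gmx -> carrier -> carrier }.

Definition vobj (V : rep) : Prop :=
  [/\ forall v, gact V 1 v = v,
      forall g h v, gact V (g * h) v = gact V g (gact V h v),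
      forall g, gact V g (zero V) = zero V
    & forall g v, v <> zero V -> gact V g v = v -> g = 1].

Definition vmorph (V W : rep) (f : V -> W) : Prop :=
  [/\ f (zero V) = zero W,
      forall g v, f (gact V g v) = gact W g (f v)
    & forall v1 v2, f v1 = f v2 -> f v1 <> zero W -> exists g, v2 = gact V g v1].

Definition is_rep_In (V : rep) : Prop :=
  [/\ vobj V,
      forall A, pmono A -> vmorph V V (mact V A),
      forall A B, pmono A -> pmono B -> forall v, mact V (pmmul A B) v = mact V A (mact V B v),
      forall v, mact V zero_gmx v = zero V
    & forall g v, mact V (scal_gmx g) v = gact V g v].

Definition rep_morph (V W : rep) (f : V -> W) : Prop :=
  vmorph V W f /\ forall A, pmono A -> forall v, f (mact V A v) = mact W A (f v).

Definition rep_iso (V W : rep) : Prop :=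
  exists (f : V -> W) (h : W -> V),
    [/\ rep_morph V W f, rep_morph W V h, cancel f h & cancel h f].

(* \hat G^{\oplus n} = {0} ∪ {g e_i}, with None = 0 and Some (g, i) = g e_i *)
Definition std_carrier : finType := option (gT * 'I_n).

Definition std_mact (A : gmx) (x : std_carrier) : std_carrier :=
  match x with
  | None => None
  | Some (h, i) =>
      match [pick j | A j i != None] with
      | Some j => match A j i with Some a => Some (a * h, j) | None => None end
      | None => None
      end
  end.

Definition std_gact (g : gT) (x : std_carrier) : std_carrier :=
  match x with None => None | Some (h, i) => Some (g * h, i) end.

Definition std_rep : rep := Rep std_carrier None std_gact std_mact.

(* direct sum of k copies of \hat G^{\oplus n}: disjoint union of k copies
   with the zeros identified; Some (h, i, c) = h e_i in the c-th summand *)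
Definition sum_carrier (k : nat) : finType := option (gT * 'I_n * 'I_k).

Definition sum_mact (k : nat) (A : gmx) (x : sum_carrier k) : sum_carrier k :=
  match x with
  | None => None
  | Some (h, i, c) =>
      match std_mact A (Some (h, i)) with
      | Some (h', j) => Some (h', j, c)
      | None => None
      end
  end.

Definition sum_gact (k : nat) (g : gT) (x : sum_carrier k) : sum_carrier k :=
  match x with None => None | Some (h, i, c) => Some (g * h, i, c) end.

Definition sum_std (k : nat) : rep :=
  Rep (sum_carrier k) None (sum_gact k) (sum_mact k).

Definition is_lub (T : Type) (le : T -> T -> Prop) (P S : T -> Prop) (x : T) : Prop :=
  [/\ P x, forall a, S a -> le a x
    & forall y, P y -> (forall a, S a -> le a y) -> le x y].

Definition end_le (V : rep) (f f' : V -> V) : Prop :=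
  forall x, f x <> zero V -> f' x = f x.

Definition mx_le (A B : gmx) : Prop :=
  forall x : std_carrier, std_mact A x <> None -> std_mact B x = std_mact A x.

Definition is_rep_M (V : rep) : Prop :=
  is_rep_In V /\
  forall (S : gmx -> Prop), (forall A, S A -> pmono A) ->
  forall m, is_lub _ mx_le (fun A => pmono A) S m ->
    is_lub _ (end_le V) (vmorph V V)
           (fun f => exists A, S A /\ f =1 mact V A) (mact V m).

Definition rep_simple (V : rep) : Prop :=
  [/\ is_rep_In V, exists v, v <> zero V
    & forall S : V -> Prop, S (zero V) ->
        (forall g v, S v -> S (gact V g v)) ->
        (forall A v, pmono A -> S v -> S (mact V A v)) ->
        (forall v, S v -> v = zero V) \/ (forall v, S v)].

End Defs.

(* Main.v *)
Require Import Defs.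
From mathcomp Require Import all_boot all_order all_algebra all_fingroup.
From Stdlib Require Import Classical.

Set Implicit Arguments. Unset Strict Implicit.
Local Open Scope ring_scope.
Local Open Scope group_scope.

Section Basic.
Variables (gT : finGroupType) (n : nat).
Notation gmx := (gmx gT n).
Notation pm := (pmono gT n).
Notation pmul := (pmmul gT n).
Notation smact := (std_mact gT n).

Definition Emx (j i : 'I_n) (g : gT) : gmx :=
  \matrix_(x, y) if (x == j) && (y == i) then Some g else None.

Lemma col_uniq (A : gmx) x y i : pm A -> A x i != None -> A y i != None -> x = y.
Proof.
case/andP=> _ /forallP /(_ i) /card_le1_eqP h hx hy.
by apply: h; rewrite inE.
Qed.

Lemma row_uniq (A : gmx) x y j : pm A -> A j x != None -> A j y != None -> x = y.
Proof.
case/andP=> /forallP /(_ j) /card_le1_eqP h _ hx hy.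
by apply: h; rewrite inE.
Qed.

Lemma pmono_by (A : gmx) (r c : 'I_n -> 'I_n) :
  (forall i j, A i j != None -> j = r i) -> (forall i j, A i j != None -> i = c j) -> pm A.
Proof.
move=> hr hc; apply/andP; split; apply/forallP => i; apply/card_le1_eqP => x y;
rewrite !inE => hx hy.
- by rewrite (hr _ _ hx) (hr _ _ hy).
- by rewrite (hc _ _ hx) (hc _ _ hy).
Qed.

Lemma pmono_sub (A B : gmx) : pm A -> (forall x y, B x y != None -> A x y != None) -> pm B.
Proof.
case/andP=> /forallP hr /forallP hc hBA; apply/andP; split; apply/forallP => i.
- apply: leq_trans (hr i); apply: subset_leq_card; apply/subsetP => x; rewrite !inE; exact: hBA.
- apply: leq_trans (hc i); apply: subset_leq_card; apply/subsetP => x; rewrite !inE; exact: hBA.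
Qed.

Lemma pmono_E j i g : pm (Emx j i g).
Proof.
apply: (@pmono_by _ (fun _ : 'I_n => i) (fun _ : 'I_n => j)) => x y; rewrite mxE.
- by case: (eqVneq y i) => [->|] //; rewrite andbF.
- by case: (eqVneq x j) => [->|] //; rewrite andFb.
Qed.

Lemma pmono_scal g : pm (scal_gmx gT n g).
Proof.
apply: (@pmono_by _ id id) => x y; rewrite mxE.
- by case: (eqVneq x y).
- by case: (eqVneq x y).
Qed.

Lemma pmono_zero : pm (zero_gmx gT n).
Proof. by apply: (@pmono_by _ id id) => x y; rewrite mxE. Qed.

Lemma pmmul_entry (A B : gmx) x y k b :
  (forall k', B k' y != None -> k' = k) -> B k y = Some b ->
  pmul A B x y = gmul gT (A x k) (Some b).
Proof.
move=> hk hb; rewrite /pmmul mxE; case: pickP => [k' /andP[hA hB] | h].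
- by have e := hk k' hB; subst k'; rewrite hb.
- have := h k; rewrite hb /= andbT => /negbFE/eqP ->; done.
Qed.

Lemma pmmul_entry0 (A B : gmx) x y :
  (forall k, B k y = None) -> pmul A B x y = None.
Proof.
move=> hB; rewrite /pmmul mxE; case: pickP => [k /andP[_ ]|] //.
by rewrite hB.
Qed.

Lemma colP (A : gmx) i : pm A ->
  (forall x, A x i = None) \/ exists j a, A j i = Some a /\ forall x, A x i != None -> x = j.
Proof.
move=> hA; case: (pickP (fun x => A x i != None)) => [j hj | h].
- right; case e: (A j i) hj => [a|] // _; exists j, a; split => // x hx.
  by apply: (col_uniq hA hx); rewrite e.
- by left => x; have := h x => /negbFE/eqP.
Qed.

Lemma smact_some (A : gmx) i j a h :
  (forall x, A x i != None -> x = j) -> A j i = Some a ->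
  smact A (Some (h, i)) = Some (a * h, j).
Proof.
move=> hu ha; rewrite /std_mact; case: pickP => [x hx | hn].
- by have e := hu x hx; subst x; rewrite ha.
- by have := hn j; rewrite ha.
Qed.

Lemma smact_none (A : gmx) i h :
  (forall x, A x i = None) -> smact A (Some (h, i)) = None.
Proof.
move=> hn; rewrite /std_mact; case: pickP => [x |] //.
by rewrite hn.
Qed.

Lemma Emx_right (A : gmx) i l g x y :
  pmul A (Emx i l g) x y = if y == l then gmul gT (A x i) (Some g) else None.
Proof.
case: (eqVneq y l) => [->|hy].
- apply: (pmmul_entry _ _ (k := i)); last by rewrite mxE !eqxx.
  by move=> k'; rewrite mxE; case: (eqVneq k' i).
- by apply: pmmul_entry0 => k; rewrite mxE (negbTE hy) andbF.
Qed.

Lemma EE j i g i' l h :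
  pmul (Emx j i g) (Emx i' l h) = if i' == i then Emx j l (g * h) else zero_gmx gT n.
Proof.
apply/matrixP => x y; rewrite Emx_right; case: (eqVneq i' i) => [->|hi].
- by rewrite !mxE eqxx andbT; case: (x == j); case: (y == l).
- by rewrite !mxE (negbTE hi) andbF; case: (y == l).
Qed.

Lemma AE (A : gmx) i j a l g : pm A -> A j i = Some a ->
  pmul A (Emx i l g) = Emx j l (a * g).
Proof.
move=> hA ha; apply/matrixP => x y; rewrite Emx_right mxE.
case: (eqVneq x j) => [->|hx]; first by rewrite ha /=; case: (y == l).
case e: (A x i) => [b|] /=; last by case: (y == l).
have := col_uniq hA (x := x) (y := j) (i := i); rewrite e ha => /(_ isT isT) ex.
by rewrite ex eqxx in hx.
Qed.

Lemma AE0 (A : gmx) i l g : (forall x, A x i = None) ->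
  pmul A (Emx i l g) = zero_gmx gT n.
Proof.
move=> h; apply/matrixP => x y; rewrite Emx_right !mxE h.
by case: (y == l).
Qed.

Lemma scalE a j l g : pmul (scal_gmx gT n a) (Emx j l g) = Emx j l (a * g).
Proof. by apply: AE; [exact: pmono_scal | rewrite mxE eqxx]. Qed.

Lemma smact_E j i g h i' :
  smact (Emx j i g) (Some (h, i')) = if i' == i then Some (g * h, j) else None.
Proof.
case: (eqVneq i' i) => [->|hi].
- apply: smact_some; last by rewrite mxE !eqxx.
  by move=> x; rewrite mxE; case: (eqVneq x j).
- by apply: smact_none => x; rewrite mxE (negbTE hi) andbF.
Qed.

Lemma smact_scal g h i : smact (scal_gmx gT n g) (Some (h, i)) = Some (g * h, i).
Proof.
apply: smact_some; last by rewrite mxE eqxx.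
by move=> x; rewrite mxE; case: (eqVneq x i).
Qed.

End Basic.

Section RepFacts.
Variables (gT : finGroupType) (n : nat) (V : rep gT n).
Hypothesis hV : is_rep_In gT n V.
Notation gmx := (gmx gT n).
Notation pm := (pmono gT n).
Notation pmul := (pmmul gT n).
Notation smact := (std_mact gT n).
Notation act := (Defs.mact gT n V).
Notation ga := (Defs.gact gT n V).
Notation z := (Defs.zero gT n V).

Lemma ga1 v : ga 1 v = v. Proof. by case: hV => [[]]. Qed.
Lemma gaM g h v : ga (g * h) v = ga g (ga h v). Proof. by case: hV => [[]]. Qed.
Lemma ga0 g : ga g z = z. Proof. by case: hV => [[]]. Qed.
Lemma gafree g v : v <> z -> ga g v = v -> g = 1.
Proof. by case: hV => [[_ _ _ h]] *; apply: (h g v). Qed.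
Lemma gaK g v : ga g^-1 (ga g v) = v. Proof. by rewrite -gaM mulVg ga1. Qed.
Lemma gaKV g v : ga g (ga g^-1 v) = v. Proof. by rewrite -gaM mulgV ga1. Qed.
Lemma ga_eq0 g v : ga g v = z -> v = z.
Proof. by move=> e; rewrite -(gaK g v) e ga0. Qed.
Lemma act_comp A B v : pm A -> pm B -> act (pmul A B) v = act A (act B v).
Proof. by case: hV => _ _ h _ _ hA hB; apply: h. Qed.
Lemma act_zmx v : act (zero_gmx gT n) v = z. Proof. by case: hV. Qed.
Lemma act_scal g v : act (scal_gmx gT n g) v = ga g v. Proof. by case: hV. Qed.
Lemma act_vm A : pm A -> vmorph gT n V V (act A). Proof. by case: hV => _ h _ _ _; apply: h. Qed.
Lemma act0 A : pm A -> act A z = z. Proof. by case/act_vm. Qed.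
Lemma act_ga A g v : pm A -> act A (ga g v) = ga g (act A v). Proof. by case/act_vm. Qed.

Lemma actE j i g l h v : act (Emx j i g) (act (Emx i l h) v) = act (Emx j l (g * h)) v.
Proof. by rewrite -act_comp ?pmono_E // EE eqxx. Qed.

Lemma actE0 j i g i' l h v : i' != i -> act (Emx j i g) (act (Emx i' l h) v) = z.
Proof. by move=> hi; rewrite -act_comp ?pmono_E // EE (negbTE hi) act_zmx. Qed.

Lemma act_Eg j i g v : act (Emx j i g) v = ga g (act (Emx j i 1) v).
Proof. by rewrite -act_scal -act_comp ?pmono_E ?pmono_scal // scalE mulg1. Qed.

End RepFacts.

Section PartA.
Variables (gT : finGroupType) (n : nat) (V : rep gT n).
Hypothesis hV : is_rep_In gT n V.
Notation gmx := (gmx gT n).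
Notation pm := (pmono gT n).
Notation pmul := (pmmul gT n).
Notation smact := (std_mact gT n).
Notation act := (Defs.mact gT n V).
Notation ga := (Defs.gact gT n V).
Notation z := (Defs.zero gT n V).

Definition QV := forall v : V, v <> z -> exists i, act (Emx i i 1) v = v.

Lemma col_some (A : gmx) j i b : pm A -> A j i = Some b -> forall x, A x i != None -> x = j.
Proof. by move=> hA hb x hx; apply: (col_uniq hA hx); rewrite hb. Qed.

Lemma smact_colE (A B : gmx) i h : (forall x, A x i = B x i) ->
  smact A (Some (h, i)) = smact B (Some (h, i)).
Proof.
move=> hAB; rewrite /std_mact.
have -> : [pick j | A j i != None] = [pick j | B j i != None].
  by apply: eq_pick => j; rewrite /= hAB.
by case: pickP => // j _; rewrite hAB.
Qed.

Lemma actAE (A : gmx) i v : pm A -> act (Emx i i 1) v = v ->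
  act A v = act (pmul A (Emx i i 1)) v.
Proof. by move=> hA hv; rewrite act_comp ?pmono_E // hv. Qed.

Lemma agree (A m : gmx) j i b v : pm A -> pm m -> mx_le gT n A m -> A j i = Some b ->
  act (Emx i i 1) v = v -> act A v = act m v.
Proof.
move=> hA hm hle hb hv.
rewrite (actAE hA hv) (actAE hm hv) (AE _ _ hA hb).
have hs := smact_some 1 (col_some hA hb) hb.
have := hle (Some (1, i)); rewrite hs => /(_ ltac:(by [])).
case: (colP i hm) => [hn | [j' [a' [ha' hu]]]].
  by rewrite smact_none.
rewrite (smact_some _ hu ha') => -[e1 e2]; subst j'.
by rewrite (AE _ _ hm ha') e1.
Qed.

Lemma partA : QV -> is_rep_M gT n V.
Proof.
move=> hQ; split => // S hS m [hm hub hlub]; split.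
- exact: act_vm.
- move=> f [A [hSA hf]] x; rewrite hf => hx.
  have hA := hS A hSA.
  have xnz : x <> z by move=> e; apply: hx; rewrite e act0.
  have [i hi] := hQ x xnz.
  case: (colP i hA) => [hn | [j [b [hb _]]]].
    by exfalso; apply: hx; rewrite (actAE hA hi) (AE0 _ _ hn) act_zmx.
  by rewrite (agree hA hm (hub A hSA) hb hi).
- move=> f hf hfub x hx.
  have xnz : x <> z by move=> e; apply: hx; rewrite e act0.
  have [i hi] := hQ x xnz.
  case: (colP i hm) => [hn | [j [a [ha hu]]]].
    by exfalso; apply: hx; rewrite (actAE hm hi) (AE0 _ _ hn) act_zmx.
  have [A [hSA [j' [b hb]]]] : exists A, S A /\ exists j' b, A j' i = Some b.
    apply: NNPP => hno.
    pose m' : gmx := \matrix_(x, y) if y == i then None else m x y.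
    have hm' : pm m'.
      apply: (pmono_sub hm) => x' y'; rewrite mxE; by case: (y' == i).
    have hub' : forall A, S A -> mx_le gT n A m'.
      move=> A hSA [[h' i']|]; last by [].

      case: (eqVneq i' i) => [->|ne] hne.
        case: (colP i (hS A hSA)) => [hn | [j1 [b1 [hb1 _]]]].
          by exfalso; apply: hne; rewrite smact_none.
        by exfalso; apply: hno; exists A; split => //; exists j1, b1.
      rewrite -(hub A hSA (Some (h', i'))) //.
      by apply: smact_colE => x'; rewrite mxE (negbTE ne).
    have := hlub m' hm' hub' (Some (1, i)).
    rewrite (smact_some _ hu ha) smact_none; last by move=> x'; rewrite mxE eqxx.
    by move=> /(_ ltac:(by [])).
  rewrite -(agree (hS A hSA) hm (hub A hSA) hb hi).
  apply: (hfub (act A)); first by exists A.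
  by rewrite (agree (hS A hSA) hm (hub A hSA) hb hi).
Qed.

End PartA.

Section PartB.
Variables (gT : finGroupType) (n : nat) (V : rep gT n).
Hypothesis hV : is_rep_In gT n V.
Notation gmx := (gmx gT n).
Notation pm := (pmono gT n).
Notation pmul := (pmmul gT n).
Notation smact := (std_mact gT n).
Notation act := (Defs.mact gT n V).
Notation ga := (Defs.gact gT n V).
Notation z := (Defs.zero gT n V).

Lemma orbE (v x : V) h : [exists g, ga h x == ga g v] = [exists g, x == ga g v].
Proof.
apply/existsP/existsP => -[g /eqP e]; last by exists (h * g); rewrite e (gaM hV).
by exists (h^-1 * g); rewrite (gaM hV) -e (gaK hV).
Qed.

Lemma partB : is_rep_M gT n V -> QV V.
Proof.
case=> _ hM v vnz.
pose S := fun A : gmx => exists i, A = Emx i i 1.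
have hS : forall A, S A -> pm A by move=> A [i ->]; apply: pmono_E.
have hlub : is_lub _ (mx_le gT n) (fun A => pm A) S (scal_gmx gT n 1).
  split; first exact: pmono_scal.
  - move=> A [i ->] [[h i']|]; last by [].
    rewrite smact_E smact_scal; case: (eqVneq i' i) => [->|] //.
  - move=> y _ hy [[h i]|] _; last by [].
    have := hy _ (ex_intro _ i erefl) (Some (h, i)).
    by rewrite smact_E eqxx smact_scal => /(_ ltac:(by [])).
have [_ hub hl] := hM S hS _ hlub.
have hub' : forall i x, act (Emx i i 1) x <> z -> act (Emx i i 1) x = x.
  move=> i x hx; have := hub (act (Emx i i 1)) (ex_intro _ _ (conj (ex_intro _ i erefl) (frefl _))) x hx.
  by rewrite (act_scal hV) ?(ga1 hV).
case: (boolP [exists i, act (Emx i i 1) v == v]) => [/existsP [i /eqP hi]|hno].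
  by exists i.
exfalso.
have hz : forall i, act (Emx i i 1) v = z.
  move=> i; apply: NNPP => hne; move/negP: hno; apply; apply/existsP; exists i.
  by apply/eqP; apply: hub'.
pose f := fun x : V => if [exists g, x == ga g v] then z else x.
have hf : vmorph gT n V V f.
  split.
  - by rewrite /f; case: ifP.
  - move=> g x; rewrite /f orbE; case: ifP => _ //; by rewrite (ga0 hV).
  - move=> v1 v2; rewrite /f; case: ifP => _ //; case: ifP => _ // -> _.
    by exists 1; rewrite (ga1 hV).
have hfu : forall a, (exists A, S A /\ a =1 act A) -> end_le gT n V a f.
  move=> g [A [[i ->] hA]] x; rewrite hA => hx.
  rewrite (hub' _ _ hx) /f; case: ifP => // /existsP [g' /eqP e].
  by exfalso; apply: hx; rewrite e (act_ga hV) ?pmono_E // hz (ga0 hV).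
have := hl f hf hfu v.
rewrite (act_scal hV) (ga1 hV) => /(_ vnz); rewrite /f.
case: ifP => [_ e|/negbT/negP hn]; first by apply: vnz; rewrite e.
by exfalso; apply: hn; apply/existsP; exists 1; rewrite (ga1 hV).
Qed.

End PartB.

Section PartD.
Variables (gT : finGroupType) (n : nat) (V : rep gT n).
Notation act := (Defs.mact gT n V).
Notation z := (Defs.zero gT n V).

Lemma sum_mactE k A h i (c : 'I_k) : sum_mact gT n k A (Some (h, i, c)) =
  match std_mact gT n A (Some (h, i)) with Some (h', j) => Some (h', j, c) | None => None end.
Proof. by []. Qed.

Lemma partD k : rep_iso gT n V (sum_std gT n k) -> QV V.
Proof.
case=> f [h [[[h0 _ _] _] [[hn _ _] hh] fK _]] v vnz.
case e: (f v) => [[[g i] c]|].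
  exists i; rewrite -{1}(fK v) -hh ?pmono_E // e.
  change (Defs.mact _ _ (sum_std _ _ k)) with (sum_mact gT n k).
  rewrite sum_mactE smact_E eqxx mul1g.
  by rewrite -e fK.
by exfalso; apply: vnz; rewrite -(fK v) e hn.
Qed.
End PartD.

Lemma comm_ab (gT : finGroupType) : abelian [set: gT] -> forall x y : gT, x * y = y * x.
Proof. by move=> /centsP h x y; apply: (h x (in_setT x) y (in_setT y)). Qed.

Section PartE.
Variables (gT : finGroupType) (n : nat).
Hypothesis hab : abelian [set: gT].
Notation gmx := (gmx gT n).
Notation pm := (pmono gT n).
Notation pmul := (pmmul gT n).
Notation smact := (std_mact gT n).

Lemma std_gactE g h i : std_gact gT n g (Some (h, i)) = Some (g * h, i).
Proof. by []. Qed.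

Lemma std_rep_In : is_rep_In gT n (std_rep gT n).
Proof.
have cm := comm_ab hab.
split.
- split.
  + by case=> [[h i]|] //; rewrite /= mul1g.
  + by move=> g h [[x i]|] //; rewrite /= mulgA.
  + by [].
  + move=> g [[h i]|] // _ [e]; apply: (mulIg h); by rewrite mul1g.
- move=> A hA; split.
  + by [].
  + move=> g [[h i]|]; last by [].
    change (Defs.gact _ _ (std_rep gT n)) with (std_gact gT n).
    change (Defs.mact _ _ (std_rep gT n)) with (std_mact gT n).
    rewrite std_gactE.
    case: (colP i hA) => [hn|[j [a [ha hu]]]].
      by rewrite !(smact_none _ hn).
    by rewrite !(smact_some _ hu ha) std_gactE !mulgA (cm a g).
  + change (Defs.gact _ _ (std_rep gT n)) with (std_gact gT n).
    change (Defs.mact _ _ (std_rep gT n)) with (std_mact gT n).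
    move=> [[h1 i1]|] [[h2 i2]|].
    * case: (colP i1 hA) => [hn1|[j1 [a1 [ha1 hu1]]]]; first by rewrite (smact_none _ hn1).
      case: (colP i2 hA) => [hn2|[j2 [a2 [ha2 hu2]]]]; first by rewrite (smact_none _ hn2).
      rewrite (smact_some _ hu1 ha1) (smact_some _ hu2 ha2) => -[e1 e2] _; subst j2.
      have ei : i1 = i2 by apply: (row_uniq hA (j := j1)); rewrite ?ha1 ?ha2.
      subst i2; rewrite ha1 in ha2; case: ha2 => ea; subst a2.
      by exists (h2 * h1^-1); rewrite std_gactE -mulgA mulVg mulg1.
    * by move=> e ne; exfalso; apply: ne; rewrite e.
    * by move=> _ ne; exfalso; apply: ne.
    * by move=> _ ne; exfalso; apply: ne.
- change (Defs.mact _ _ (std_rep gT n)) with (std_mact gT n).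
  move=> A B hA hB [[h i]|]; last by [].
  case: (colP i hB) => [hn|[j [b [hb hu]]]].
    rewrite (smact_none _ hn) smact_none // => x.
    exact: pmmul_entry0.
  rewrite (smact_some _ hu hb).
  case: (colP j hA) => [hn|[l [a [ha hu']]]].
    rewrite (smact_none _ hn) smact_none // => x.
    by rewrite (pmmul_entry _ _ hu hb) hn.
  rewrite (smact_some _ hu' ha) (smact_some (j := l) (a := a * b)) ?mulgA //.
    move=> x; rewrite (pmmul_entry _ _ hu hb).
    by case e: (A x j) => [a'|] //= _; apply: hu'; rewrite e.
  by rewrite (pmmul_entry _ _ hu hb) ha.
- by move=> [[h i]|] //; apply: smact_none => x; rewrite mxE.
- by move=> g [[h i]|] //; apply: smact_scal.
Qed.

Lemma std_simple : (0 < n)%N -> rep_simple gT n (std_rep gT n).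
Proof.
move=> hn; split; first exact: std_rep_In.
  by exists (Some (1, Ordinal hn)).
move=> S S0 Sg SA.
case: (classic (exists v, S v /\ v <> None)) => [[v [Sv vnz]]|hno]; [right|left].
- case: v Sv vnz => [[h i]|] // Sv _ [[h' i']|] //.
  have := SA (Emx i' i (h' * h^-1)) _ (pmono_E _ _ _) Sv.
  change (Defs.mact _ _ (std_rep gT n)) with (std_mact gT n).
  by rewrite smact_E eqxx -mulgA mulVg mulg1.
- by move=> v Sv; apply: NNPP => ne; apply: hno; exists v.
Qed.

End PartE.

Lemma inv_morph (gT : finGroupType) (n : nat) (V W : rep gT n) (phi : W -> V) (psi : V -> W) :
  (forall v, Defs.gact gT n V 1 v = v) ->
  rep_morph gT n W V phi -> cancel psi phi -> cancel phi psi -> rep_morph gT n V W psi.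
Proof.
move=> g1 [[h0 hg _] hA] K1 K2; split; first split.
- by rewrite -h0 K2.
- by move=> g v; rewrite -{1}(K1 v) -hg K2.
- move=> v1 v2 e _; exists 1; rewrite g1.
  by rewrite -(K1 v1) -(K1 v2) e.
- by move=> A hpA v; rewrite -{1}(K1 v) -hA // K2.
Qed.

Section PartC.
Variables (gT : finGroupType) (n : nat) (V : rep gT n).
Hypothesis hab : abelian [set: gT].
Hypothesis hV : is_rep_In gT n V.
Hypothesis hQ : QV V.
Hypothesis hn : (0 < n)%N.
Notation gmx := (gmx gT n).
Notation pm := (pmono gT n).
Notation pmul := (pmmul gT n).
Notation smact := (std_mact gT n).
Notation act := (Defs.mact gT n V).
Notation ga := (Defs.gact gT n V).
Notation z := (Defs.zero gT n V).

Let i0 : 'I_n := Ordinal hn.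
Let E0 := act (Emx i0 i0 1).
Let orb (v : V) : pred V := fun w => [exists g, w == ga g v].
Let canon (v : V) : V := odflt z [pick w | orb v w].

Lemma orb_self v : orb v v.
Proof. by apply/existsP; exists 1; rewrite (ga1 hV). Qed.

Lemma canon_in v : exists g, canon v = ga g v.
Proof.
rewrite /canon; case: pickP => [w /existsP [g /eqP ->]|h]; first by exists g.
by have := h v; rewrite orb_self.
Qed.

Lemma orb_ga v h : orb (ga h v) =1 orb v.
Proof.
move=> w; apply/existsP/existsP => -[g /eqP e].
  by exists (g * h); rewrite e (gaM hV).
by exists (g * h^-1); rewrite e (gaM hV) (gaK hV).
Qed.

Lemma canon_ga v h : canon (ga h v) = canon v.
Proof. by rewrite /canon (eq_pick (orb_ga v h)). Qed.

Let P (v : V) := (v != z) && (E0 v == v).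
Let reps := undup [seq canon v | v <- [seq v <- enum V | P v]].

Lemma reps_prop r : r \in reps -> [/\ r <> z, E0 r = r & canon r = r].
Proof.
rewrite mem_undup => /mapP [v]; rewrite mem_filter mem_enum andbT /P => /andP [/eqP vnz /eqP ev] ->.
have [g eg] := canon_in v; rewrite eg; split.
- by move/(ga_eq0 hV).
- by rewrite /E0 (act_ga hV) ?pmono_E // -/(E0 v) ev.
- by rewrite canon_ga -eg.
Qed.

Let k := size reps.

Definition phi (x : sum_carrier gT n k) : V :=
  match x with
  | None => z
  | Some (h, i, c) => ga h (act (Emx i i0 1) (nth z reps c))
  end.

Lemma nth_reps (c : 'I_k) : nth z reps c \in reps.
Proof. by apply: mem_nth. Qed.

Lemma phi_back h i (c : 'I_k) : act (Emx i0 i 1) (phi (Some (h, i, c))) = ga h (nth z reps c).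
Proof.
have [_ e _] := reps_prop (nth_reps c).
by rewrite /= (act_ga hV) ?pmono_E // (actE hV) mulg1 -/E0 e.
Qed.

Lemma phi_nz h i c : phi (Some (h, i, c)) <> z.
Proof.
move=> e; have := phi_back h i c; rewrite e (act0 hV) ?pmono_E // => /esym /(ga_eq0 hV).
by have [] := reps_prop (nth_reps c).
Qed.

Lemma phi_proj h i i' c : act (Emx i' i' 1) (phi (Some (h, i, c))) =
  if i == i' then phi (Some (h, i, c)) else z.
Proof.
rewrite /= (act_ga hV) ?pmono_E //; case: (eqVneq i i') => [->|ne].
  by rewrite (actE hV) mulg1.
by rewrite (actE0 hV) ?(ga0 hV) // eq_sym.
Qed.

Lemma phi_inj : injective phi.
Proof.
move=> [[[h i] c]|] [[[h' i'] c']|] //; last first.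
- by move=> e; exfalso; apply: (@phi_nz h' i' c'); rewrite -e.
- by move=> e; exfalso; apply: (@phi_nz h i c).
move=> e.
have ei : i = i'.
  have := phi_proj h' i' i c'; rewrite -e phi_proj eqxx.
  case: (eqVneq i' i) => [//|_] => /phi_nz [].
subst i'.
have e2 := phi_back h i c; rewrite e phi_back in e2.
have [_ _ K1] := reps_prop (nth_reps c).
have [r0 _ K2] := reps_prop (nth_reps c').
have er : nth z reps c = nth z reps c'.
  by rewrite -K1 -K2 -(canon_ga _ h) -(canon_ga (nth z reps c') h') e2.
have ec : c = c'.
  apply: val_inj; apply/eqP; rewrite -(nth_uniq z (ltn_ord c) (ltn_ord c') (undup_uniq _)).
  by rewrite er.
subst c'.
have : h'^-1 * h = 1.
  by apply: (gafree hV r0); rewrite (gaM hV) -e2 (gaK hV).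
by move=> e3; rewrite -(mulKVg h' h) e3 mulg1.
Qed.

Lemma phi_surj v : exists x, phi x = v.
Proof.
case: (boolP (v == z)) => [/eqP ->|/eqP vnz]; first by exists None.
have [i hi] := hQ vnz.
pose w := act (Emx i0 i 1) v.
have hw : act (Emx i i0 1) w = v by rewrite (actE hV) mulg1.
have wE : E0 w = w by rewrite /E0 /w (actE hV) mulg1.
have wnz : w <> z by move=> e; apply: vnz; rewrite -hw e (act0 hV) ?pmono_E.
have cin : canon w \in reps.
  rewrite mem_undup; apply: map_f; rewrite mem_filter mem_enum andbT /P.
  by rewrite wE eqxx andbT; apply/eqP.
have [g eg] := canon_in w.
exists (Some (g^-1, i, Ordinal (etrans (index_mem _ _) cin))).
by rewrite /= nth_index // eg -(act_ga hV) ?pmono_E // (gaK hV).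
Qed.

Lemma phi_morph : rep_morph gT n (sum_std gT n k) V phi.
Proof.
have cm := comm_ab hab.
split; first split.
- by [].
- move=> g [[[h i] c]|]; last by rewrite /= (ga0 hV).
  by rewrite /= (gaM hV).
- move=> v1 v2 e _; exists 1; rewrite -(phi_inj e).
  by case: v1 {e} => [[[h i] c]|] //; rewrite /= mul1g.
- move=> A hA [[[h i] c]|]; last by rewrite /= (act0 hV).
  change (Defs.mact _ _ (sum_std gT n k)) with (sum_mact gT n k).
  rewrite sum_mactE [phi (Some (h, i, c))]/= (act_ga hV) // -(act_comp hV) ?pmono_E //.
  case: (colP i hA) => [hn0|[j [a [ha hu]]]].
    by rewrite (smact_none _ hn0) (AE0 _ _ hn0) (act_zmx hV) (ga0 hV).
  rewrite (smact_some _ hu ha) (AE _ _ hA ha) /= mulg1.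
  by rewrite [in RHS](act_Eg hV) -(gaM hV) (cm a h).
Qed.

Lemma partC : exists k, rep_iso gT n V (sum_std gT n k).
Proof.
exists k.
pose psi (v : V) : sum_carrier gT n k := odflt None [pick x | phi x == v].
have K1 : cancel psi phi.
  move=> v; rewrite /psi; case: pickP => [x /eqP //|hno].
  by have [x hx] := phi_surj v; have := hno x; rewrite hx eqxx.
have K2 : cancel phi psi.
  move=> x; rewrite /psi; case: pickP => [y /eqP/phi_inj //|hno].
  by have := hno x; rewrite eqxx.
exists psi, phi; split => //; last exact: phi_morph.
by apply: (inv_morph (ga1 hV) phi_morph K1 K2).
Qed.

End PartC.

Theorem mainTheorem15 (gT : finGroupType) (n : nat) :
  abelian [set: gT] -> (0 < n)%N ->
  rep_simple gT n (std_rep gT n) /\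
  forall V : rep gT n, is_rep_In gT n V ->
    (is_rep_M gT n V <-> exists k : nat, rep_iso gT n V (sum_std gT n k)).
Proof.
move=> hab hn; split; first exact: std_simple.
move=> V hV; split.
- by move=> hM; apply: (partC hab hV (partB hV hM) hn).
- by case=> k hk; apply: (partA hV (partD hk)).
Qed.
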